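(* Let $V$ be a finite-dimensional super vector space over a field of characteristic $0$ and let $\omega:V\times V\to V$ be a bilinear map with $\omega(V_\alpha,V_\beta)\subseteq V_{\alpha+\beta}$. For $x\in V$ let $\mathrm{ad}_\omega(x)\in\mathfrak{gl}(V)$ be $\mathrm{ad}_\omega(x)(y)=\omega(x,y)$, and let $\mathcal{F}_\omega=\{\mathrm{ad}_\omega(x)+x: x\in V\}\subseteq\mathcal{E}=\mathfrak{gl}(V)\oplus V$. Then $(V,\omega)$ is a Lie superalgebra (with bracket $[x,y]=\omega(x,y)$) if and only if $\mathcal{F}_\omega=\mathcal{F}_\omega^{\perp}$ and $\mathcal{F}_\omega$ is closed under the bracket $[\![\cdot,\cdot]\!]$.
   Context: $\mathfrak{gl}(V)$: linear endomorphisms of $V$ with natural $\mathbb{Z}_2$-grading and supercommutator $[A,B]=AB-(-1)^{|A||B|}BA$. $\mathcal{E}=\mathfrak{gl}(V)\oplus V$ graded by $\mathcal{E}_\alpha=\mathfrak{gl}(V)_\alpha\oplus V_\alpha$, homogeneous elements $A+x$ with $|A|=|x|$. Bracket: $[\![A+x,B+y]\!]=[A,B]+\tfrac12(Ay-(-1)^{|x||y|}Bx)$; $V$-valued pairing: $\langle A+x,B+y\rangle=\tfrac12(Ay+(-1)^{|x||y|}Bx)$ (both extended bilinearly). For a subspace $F\subseteq\mathcal{E}$, $F^\perp=\{e\in\mathcal{E}:\langle e,f\rangle=0\ \forall f\in F\}$. A Lie superalgebra is a super vector space $L$ with bilinear bracket satisfying $[L_\alpha,L_\beta]\subseteq L_{\alpha+\beta}$,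 super skew-symmetry $[x,y]=-(-1)^{|x||y|}[y,x]$, and the super Jacobi identity $[x,[y,z]]=[[x,y],z]+(-1)^{|x||y|}[y,[x,z]]$ for homogeneous $x,y,z$. *)

(* Defs.v *)
From HB Require Import structures.
From mathcomp Require Import all_boot all_order all_algebra.
Set Implicit Arguments. Unset Strict Implicit. Unset Printing Implicit Defensive.
Import Order.TTheory GRing.Theory Num.Theory.
Local Open Scope ring_scope.

(* A finite-dimensional super vector space V = V_0 (+) V_1 over F is modelled
   as the product (V0 * V1) of two finite-dimensional F-vector spaces.
   Parities are booleans: false = 0 (even), true = 1 (odd). *)
Section Super.
Variables (F : fieldType) (V0 V1 : vectType F).
Local Notation V := (V0 * V1)%type.

Definition compV (a : bool) (v : V) : V := if a then (0, v.2) else (v.1, 0).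
Definition is_hom (a : bool) (v : V) : Prop := compV a v = v.

Definition ssign (a b : bool) : F := if a && b then -1 else 1.

Definition compGL (a : bool) (A : V -> V) : V -> V :=
  fun v => \sum_(b : bool) compV (a (+) b) (A (compV b v)).

Definition scomm (A B : V -> V) : V -> V :=
  fun v => \sum_(a : bool) \sum_(b : bool)
     (compGL a A (compGL b B v) - ssign a b *: compGL b B (compGL a A v)).

Definition Elt := ((V -> V) * V)%type.
Definition inE (e : Elt) : Prop := linear e.1.

Definition Ebracket (e f : Elt) : Elt :=
  (scomm e.1 f.1,
   \sum_(a : bool) \sum_(b : bool)
     2%:R^-1 *: (compGL a e.1 (compV b f.2)
                 - ssign a b *: compGL b f.1 (compV a e.2))).

Definition Epair (e f : Elt) : V :=
  \sum_(a : bool) \sum_(b : bool)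
     2%:R^-1 *: (compGL a e.1 (compV b f.2)
                 + ssign a b *: compGL b f.1 (compV a e.2)).

Definition adw (w : V -> V -> V) (x : V) : V -> V := fun y => w x y.
Definition inFw (w : V -> V -> V) (e : Elt) : Prop :=
  exists x : V, e.2 = x /\ forall v, e.1 v = adw w x v.

Definition inPerp (P : Elt -> Prop) (e : Elt) : Prop :=
  inE e /\ forall f, P f -> Epair e f = 0.

Definition IsLieSuperalgebra (w : V -> V -> V) : Prop :=
  [/\ (forall x, linear (w x)), (forall y, linear (fun x => w x y)),
      (forall a b x y, is_hom a x -> is_hom b y -> is_hom (a (+) b) (w x y)),
      (forall a b x y, is_hom a x -> is_hom b y -> w x y = - (ssign a b *: w y x)) &
      (forall a b c x y z, is_hom a x -> is_hom b y -> is_hom c z ->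
         w x (w y z) = w (w x y) z + ssign a b *: w y (w x z))].

End Super.

(* Main.v *)
Set Warnings "-all".
Require Import Defs.
From HB Require Import structures.
From mathcomp Require Import all_boot all_order all_algebra.
From Stdlib Require Import FunctionalExtensionality.
Import GRing.Theory.
Local Open Scope ring_scope.
Set Implicit Arguments. Unset Strict Implicit.

Section Lin.
Variables (F : fieldType) (U W : lmodType F) (f : U -> W) (Hf : linear f).
Lemma linD u v : f (u + v) = f u + f v.
Proof. by have := Hf 1 u v; rewrite !scale1r. Qed.
Lemma lin0 : f 0 = 0.
Proof. have h := linD 0 0; rewrite addr0 in h. by apply: (addIr (f 0)); rewrite add0r -h. Qed.
Lemma linZ k u : f (k *: u) = k *: f u.
Proof. by have := Hf k u 0; rewrite !addr0 lin0 addr0. Qed.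
Lemma linN u : f (- u) = - f u.
Proof. by rewrite -scaleN1r linZ scaleN1r. Qed.
End Lin.

Section Proofs.
Variables (F : fieldType) (V0 V1 : vectType F).
Local Notation V := (V0 * V1)%type.

Lemma compVK a b (v : V) : compV a (compV b v) = if a == b then compV b v else 0.
Proof. by case: a; case: b. Qed.
Lemma compV_split (v : V) : compV false v + compV true v = v.
Proof. by case: v => v1 v2 /=; rewrite /GRing.add /= /add_pair /= addr0 add0r. Qed.
Lemma compV_split' (v : V) : compV true v + compV false v = v.
Proof. by rewrite addrC compV_split. Qed.
Lemma compVD a (u v : V) : compV a (u + v) = compV a u + compV a v.
Proof. by case: a; case: u => ? ?; case: v => ? ? /=; rewrite /GRing.add /= /add_pair /= addr0. Qed.
Lemma compVZ a k (u : V) : compV a (k *: u) = k *: compV a u.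
Proof. by case: a; case: u => ? ? /=; rewrite /GRing.scale /= /scale_pair /= scaler0. Qed.
Lemma compV0 a : compV a (0 : V) = 0.
Proof. by case: a. Qed.
Lemma compVN a (u : V) : compV a (- u) = - compV a u.
Proof. by rewrite -scaleN1r compVZ scaleN1r. Qed.
Lemma hom_compV a b (v : V) : is_hom a v -> compV b v = if b == a then v else 0.
Proof. by move=> H; rewrite -{1}H compVK H. Qed.
Lemma hom_comp a (v : V) : is_hom a (compV a v).
Proof. by rewrite /is_hom compVK eqxx. Qed.
End Proofs.

Section W.
Variables (F : fieldType) (V0 V1 : vectType F).
Local Notation V := (V0 * V1)%type.
Variable w : V -> V -> V.
Hypothesis w_linl : forall y, linear (fun x => w x y).
Hypothesis w_linr : forall x, linear (w x).
Hypothesis w_graded : forall (a b : bool) (x y : V),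
      is_hom a x -> is_hom b y -> is_hom (a (+) b) (w x y).

Lemma wDl x x' y : w (x + x') y = w x y + w x' y. Proof. exact: (linD (w_linl y) x x'). Qed.
Lemma w0l y : w 0 y = 0. Proof. exact: (lin0 (w_linl y)). Qed.
Lemma wZl k x y : w (k *: x) y = k *: w x y. Proof. exact: (linZ (w_linl y) k x). Qed.
Lemma wNl x y : w (- x) y = - w x y. Proof. exact: (linN (w_linl y) x). Qed.
Lemma wDr x y y' : w x (y + y') = w x y + w x y'. Proof. exact: (linD (w_linr x) y y'). Qed.
Lemma w0r x : w x 0 = 0. Proof. exact: (lin0 (w_linr x)). Qed.
Lemma wZr k x y : w x (k *: y) = k *: w x y. Proof. exact: (linZ (w_linr x) k y). Qed.
Lemma wNr x y : w x (- y) = - w x y. Proof. exact: (linN (w_linr x) y). Qed.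
Lemma wsplitl x y : w x y = w (compV false x) y + w (compV true x) y.
Proof. by rewrite -wDl compV_split. Qed.
Lemma wsplitr x y : w x y = w x (compV false y) + w x (compV true y).
Proof. by rewrite -wDr compV_split. Qed.
Lemma wgr a b c x y : compV c (w (compV a x) (compV b y)) =
  if c == a (+) b then w (compV a x) (compV b y) else 0.
Proof. apply: hom_compV; apply: w_graded; exact: hom_comp. Qed.

Arguments compV : simpl never.
Lemma L1 a x v : compGL a (w x) v = w (compV a x) v.
Proof.
rewrite /compGL big_bool (wsplitl x (compV true v)) (wsplitl x (compV false v)) !compVD !wgr.
rewrite [RHS]wsplitr.
case: a => /=; rewrite ?addr0 ?add0r //; by rewrite addrC.
Qed.
Hypothesis charF0 : [pchar F] =i pred0.
Lemma two_neq0 : (2%:R : F) != 0.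
Proof. by move/pcharf0P: charF0 => h; rewrite h. Qed.
Lemma half0 (u : V) : 2%:R^-1 *: u = 0 -> u = 0.
Proof. move=> h; by rewrite -[u]scale1r -(mulfV two_neq0) -scalerA h scaler0. Qed.
Lemma half2 (u : V) : 2%:R^-1 *: (u + u) = u.
Proof. by rewrite -mulr2n -scaler_nat scalerA mulVf ?two_neq0 // scale1r. Qed.

Definition skew := forall a b x y, is_hom a x -> is_hom b y -> w x y = - (ssign F a b *: w y x).

Lemma Epair_w x y : Epair (w x, x) (w y, y) = \sum_(a : bool) \sum_(b : bool)
  2%:R^-1 *: (w (compV a x) (compV b y) + ssign F a b *: w (compV b y) (compV a x)).
Proof. by apply: eq_bigr => a _; apply: eq_bigr => b _; rewrite /= !L1. Qed.

Lemma perp_of_skew : skew -> forall x y, Epair (w x, x) (w y, y) = 0.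
Proof.
move=> Hs x y; rewrite Epair_w big1 // => a _; rewrite big1 // => b _.
by rewrite (Hs a b (compV a x) (compV b y) (hom_comp _ _) (hom_comp _ _)) addrC subrr scaler0.
Qed.

Lemma skew_of_perp : (forall x y, Epair (w x, x) (w y, y) = 0) -> skew.
Proof.
move=> H a b x y Hx Hy; have := H x y.
rewrite Epair_w !big_bool !(hom_compV _ Hx) !(hom_compV _ Hy).
case: a {Hx}; case: b {Hy} => /=; rewrite ?(w0l, w0r, scaler0, addr0, add0r);
  move/half0/eqP; rewrite addr_eq0 => /eqP //.
Qed.
Lemma compGL0 A a : linear A -> compGL a A (0 : V) = 0.
Proof. move=> HA; by rewrite /compGL big_bool /= !compV0 (lin0 HA) !compV0 addr0. Qed.

Lemma compGL_hom A a b (v : V) : linear A ->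
  compGL a A (compV b v) = compV (a (+) b) (A (compV b v)).
Proof.
move=> HA; rewrite /compGL big_bool /= !compVK.
by case: a; case: b => /=; rewrite ?(lin0 HA) ?compV0 ?addr0 ?add0r.
Qed.

Lemma skew' a b (y z : V) : skew ->
  ssign F a b *: w (compV b y) (compV a z) = - w (compV a z) (compV b y).
Proof.
move=> Hs; rewrite (Hs b a _ _ (hom_comp _ _) (hom_comp _ _)) scalerN scalerA.
by case: a; case: b; rewrite /ssign /= ?mulrNN ?mulr1 ?scale1r.
Qed.

Lemma perp_back : skew -> forall A z, linear A ->
  (forall y, Epair (A, z) (w y, y) = 0) -> forall v, A v = w z v.
Proof.
move=> Hs A z HA H v.
suff Hb : forall b, A (compV b v) = w z (compV b v).
  by rewrite -[v]compV_split (linD HA) wDr !Hb.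
move=> b; have := H (compV b v); rewrite /Epair /=.
under eq_bigr => a _ do under eq_bigr => b' _ do rewrite L1 !compVK.
rewrite !big_bool.
case: b => /=; rewrite ?(compGL0 _ HA, w0l, scaler0, addr0, add0r)
  !(skew' _ _ _ _ Hs) !(compGL_hom _ _ _ HA) /= -!scalerDr => /half0/eqP;
  by rewrite addrACA -opprD -wDl subr_eq0 ?compV_split ?compV_split' => /eqP.
Qed.
Lemma w_expand x y : w x y = \sum_(a : bool) \sum_(b : bool) w (compV a x) (compV b y).
Proof. by rewrite !big_bool /= -!wDr !compV_split' -(wDl (compV true x)) compV_split'. Qed.

Lemma Ebr2 x y : skew -> (Ebracket (w x, x) (w y, y)).2 = w x y.
Proof.
move=> Hs; rewrite /Ebracket /= [RHS]w_expand.
apply: eq_bigr => a _; apply: eq_bigr => b _.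
by rewrite !L1 (skew' _ _ _ _ Hs) opprK half2.
Qed.

Lemma Ebr1 x y v : (Ebracket (w x, x) (w y, y)).1 v =
  \sum_(a : bool) \sum_(b : bool)
     (w (compV a x) (w (compV b y) v) - ssign F a b *: w (compV b y) (w (compV a x) v)).
Proof. by apply: eq_bigr => a _; apply: eq_bigr => b _; rewrite !L1. Qed.

Definition jacobi := forall a b c x y z, is_hom a x -> is_hom b y -> is_hom c z ->
         w x (w y z) = w (w x y) z + ssign F a b *: w y (w x z).

Lemma jac_all : jacobi -> forall a b x y z, is_hom a x -> is_hom b y ->
  w x (w y z) = w (w x y) z + ssign F a b *: w y (w x z).
Proof.
move=> J a b x y z Hx Hy; rewrite -[z]compV_split !wDr.
rewrite (J a b false x y _ Hx Hy (hom_comp _ _)) (J a b true x y _ Hx Hy (hom_comp _ _)).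
by rewrite scalerDr addrACA.
Qed.

Lemma closure_of_jac : skew -> jacobi -> forall x y v,
  (Ebracket (w x, x) (w y, y)).1 v = w (Ebracket (w x, x) (w y, y)).2 v.
Proof.
move=> Hs J x y v; rewrite Ebr1 Ebr2 //.
transitivity (\sum_(a : bool) \sum_(b : bool) w (w (compV a x) (compV b y)) v).
  apply: eq_bigr => a _; apply: eq_bigr => b _.
  by rewrite (jac_all J v (hom_comp a x) (hom_comp b y)) addrK.
by rewrite (w_expand x y) !big_bool /= !wDl.
Qed.

Lemma jac_of_closure : skew -> (forall x y v,
  (Ebracket (w x, x) (w y, y)).1 v = w (Ebracket (w x, x) (w y, y)).2 v) -> jacobi.
Proof.
move=> Hs H a b c x y z Hx Hy Hz; have := H x y z.
rewrite Ebr1 Ebr2 // !big_bool /= !(hom_compV _ Hx) !(hom_compV _ Hy).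
case: a {Hx}; case: b {Hy} => /=; rewrite ?(w0l, w0r, scaler0, subr0, oppr0, addr0, add0r);
  by move=> <-; rewrite subrK.
Qed.
Lemma inFwE (e : Elt V0 V1) : inFw w e -> exists x, e = (w x, x).
Proof.
case: e => A z [x [/= -> H]]; exists x; congr (_, _).
by apply: functional_extensionality => v; rewrite H.
Qed.

Lemma inFw_w x : inFw w (w x, x).
Proof. by exists x. Qed.

Lemma main_sec : IsLieSuperalgebra w <->
  ((forall e : Elt V0 V1, inFw w e <-> inPerp (inFw w) e) /\
   (forall e f : Elt V0 V1, inFw w e -> inFw w f -> inFw w (Ebracket e f))).
Proof.
split.
  case=> _ _ _ Hs J; split.
    move=> e; split.
      move=> /inFwE [x ->]; split; first exact: w_linr.
      by move=> f /inFwE [y ->]; apply: perp_of_skew.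
    case: e => A z [HA H]; exists z; split => // v.
    rewrite /adw; apply: perp_back => // y; apply: H; exact: inFw_w.
  move=> e f /inFwE [x ->] /inFwE [y ->].
  exists (Ebracket (w x, x) (w y, y)).2; split => // v.
  exact: closure_of_jac.
case=> Hp Hc.
have Hs : skew.
  apply: skew_of_perp => x y.
  have [_ H] := (Hp (w x, x)).1 (inFw_w x).
  exact: H (inFw_w y).
split; [exact: w_linr | exact: w_linl | exact: w_graded | exact: Hs | ].
apply: jac_of_closure => // x y v.
  have [z [Hz Hv]] := Hc _ _ (inFw_w x) (inFw_w y).
  by rewrite Hv Hz.
Qed.
End W.

Theorem mainTheorem3 (F : fieldType) (V0 V1 : vectType F)
  (charF0 : [pchar F] =i pred0)
  (w : (V0 * V1)%type -> (V0 * V1)%type -> (V0 * V1)%type)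
  (w_linl : forall y, linear (fun x => w x y))
  (w_linr : forall x, linear (w x))
  (w_graded : forall (a b : bool) (x y : (V0 * V1)%type),
      is_hom a x -> is_hom b y -> is_hom (a (+) b) (w x y)) :
  IsLieSuperalgebra w <->
  ((forall e : Elt V0 V1, inFw w e <-> inPerp (inFw w) e) /\
   (forall e f : Elt V0 V1, inFw w e -> inFw w f -> inFw w (Ebracket e f))).
Proof. by apply: main_sec. Qed.
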